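(* Let $u, v, w \in \mathbb{N}^2$ be such that any two of $u, v, w$ are linearly independent. Then the submonoid $\mathbb{N}u+\mathbb{N}v+\mathbb{N}w$ of $\mathbb{N}^2$ generated by $u,v,w$ is isomorphic (as a monoid) to $\Lambda^{p,q,r}$ for some positive integers $p, q, r$.
   Context: $\mathbb{N}=\{0,1,2,\dots\}$. For positive integers $p,q,r$, $\Lambda^{p,q,r}=\langle a,b,c\mid pa+qb=rc\rangle$ is the quotient of the free commutative monoid $\mathbb{N}a\oplus\mathbb{N}b\oplus\mathbb{N}c$ by the congruence generated by $\lambda+pa+qb\sim\lambda+rc$ ($\lambda\in\mathbb{N}a\oplus\mathbb{N}b\oplus\mathbb{N}c$). *)

(* Defs.v *)
From mathcomp Require Import all_boot.
Set Implicit Arguments. Unset Strict Implicit. Unset Printing Implicit Defensive.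

Definition N2 := (nat * nat)%type.
Definition N3 := (nat * nat * nat)%type.

Definition add2 (x y : N2) : N2 := (x.1 + y.1, x.2 + y.2).
Definition add3 (x y : N3) : N3 :=
  (x.1.1 + y.1.1, x.1.2 + y.1.2, x.2 + y.2).
Definition smul2 (n : nat) (x : N2) : N2 := (n * x.1, n * x.2).

Definition lin_indep2 (u v : N2) : Prop := u.1 * v.2 <> u.2 * v.1.

Definition in_submonoid3 (u v w : N2) (m : N2) : Prop :=
  exists i j k : nat, m = add2 (add2 (smul2 i u) (smul2 j v)) (smul2 k w).

(* The congruence on N a (+) N b (+) N c = N^3 (a=(1,0,0), b=(0,1,0),
   c=(0,0,1)) generated by  lambda + p a + q b ~ lambda + r c. *)
Inductive lam_cong (p q r : nat) : N3 -> N3 -> Prop :=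
  | lam_gen (l : N3) : lam_cong p q r (add3 l (p, q, 0)) (add3 l (0, 0, r))
  | lam_refl (x : N3) : lam_cong p q r x x
  | lam_sym (x y : N3) : lam_cong p q r x y -> lam_cong p q r y x
  | lam_trans (x y z : N3) :
      lam_cong p q r x y -> lam_cong p q r y z -> lam_cong p q r x z.

(* Lambda^{p,q,r} = N^3 / lam_cong p q r is isomorphic (as a monoid) to the
   submonoid N u + N v + N w of N^2: there is a monoid homomorphism
   f : N^3 -> N^2 which is constant on lam_cong-classes (so descends to
   Lambda^{p,q,r}), whose induced map on classes is injective
   (f x = f y -> x ~ y), and whose image is exactly N u + N v + N w. *)
Definition lambda_iso_submonoid (p q r : nat) (u v w : N2) : Prop :=
  exists f : N3 -> N2,
    [/\ f (0, 0, 0) = (0, 0),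
        (forall x y, f (add3 x y) = add2 (f x) (f y)),
        (forall x y, lam_cong p q r x y -> f x = f y),
        (forall x y, f x = f y -> lam_cong p q r x y)
      & (forall m, in_submonoid3 u v w m <-> exists x, f x = m)].

(* Main.v *)
Require Import Defs.
From mathcomp Require Import all_boot all_algebra zify ring.
Import GRing.Theory Num.Theory.

Lemma noncyc u1 u2 v1 v2 w1 w2 : u2*v1 < u1*v2 -> v2*w1 < v1*w2 -> w2*u1 < w1*u2 -> False.
Proof. move=> h1 h2 h3.
have h4 : u2*w1 < u1*w2.
  have := ltn_mul h1 h2. case: (leqP (u1*w2) (u2*w1)) => // H.
  have := leq_mul (leqnn (v1*v2)) H. lia.
lia. Qed.

Definition fmap (x y z : N2) (e : N3) : N2 :=
  add2 (add2 (smul2 e.1.1 x) (smul2 e.1.2 y)) (smul2 e.2 z).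

Lemma chain p q r n l : lam_cong p q r (add3 l (n*p, n*q, 0)) (add3 l (0,0,n*r)).
Proof.
elim: n l => [|n IH] l.
  rewrite !mul0n; exact: lam_refl.
apply: (@lam_trans _ _ _ _ (add3 (add3 l (n*p, n*q, 0)) (0,0,r))).
  have -> : add3 l (n.+1*p, n.+1*q, 0) = add3 (add3 l (n*p,n*q,0)) (p,q,0).
    by case: l => [[a b] c]; rewrite /add3 /=; congr (_,_,_); lia.
  exact: lam_gen.
have -> : add3 (add3 l (n*p,n*q,0)) (0,0,r) = add3 (add3 l (0,0,r)) (n*p,n*q,0).
  by case: l => [[a b] c]; rewrite /add3 /=; congr (_,_,_); lia.
have -> : add3 l (0,0,n.+1*r) = add3 (add3 l (0,0,r)) (0,0,n*r).
  by case: l => [[a b] c]; rewrite /add3 /=; congr (_,_,_); lia.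
exact: IH.
Qed.

Lemma iso_of_rel (x y z : N2) p q r :
  add2 (smul2 p x) (smul2 q y) = smul2 r z ->
  (forall i j k i' j' k', fmap x y z (i,j,k) = fmap x y z (i',j',k') ->
     exists t : int, [/\ (i%:Z - i'%:Z = t * p%:Z)%R, (j%:Z - j'%:Z = t*q%:Z)%R
                       & (k%:Z - k'%:Z = - (t*r%:Z))%R]) ->
  lambda_iso_submonoid p q r x y z.
Proof.
move=> Hpqr Hrel; exists (fmap x y z); split.
- by rewrite /fmap /add2 /smul2 /= !mul0n.
- move=> [[a b] c] [[a' b'] c']; rewrite /fmap /add2 /add3 /smul2 /=; congr (_,_); lia.
- move=> e e'; elim=> //.
  + move=> [[a b] c]; move: Hpqr; rewrite /fmap /add2 /add3 /smul2 /= => -[h1 h2].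
    congr (_,_); lia.
  + move=> ? ? ? _ H1 _ H2; exact: etrans H1 H2.
- move=> [[i j] k] [[i' j'] k'] E; have [t [h1 h2 h3]] := Hrel _ _ _ _ _ _ E.
  case: t h1 h2 h3 => n h1 h2 h3.
  + have e1 : i = i' + n*p by lia.
    have e2 : j = j' + n*q by lia.
    have e3 : k' = k + n*r by lia.
    subst; have := chain p q r n (i',j',k); by rewrite /add3 /= !addn0.
  + rewrite NegzE in h1 h2 h3.
    have e1 : i' = i + n.+1*p by lia.
    have e2 : j' = j + n.+1*q by lia.
    have e3 : k = k' + n.+1*r by lia.
    subst; apply: lam_sym; have := chain p q r n.+1 (i,j,k'); by rewrite /add3 /= !addn0.
- move=> m; split.
    by move=> [i [j [k ->]]]; exists (i,j,k).
  by move=> [[[i j] k] <-]; exists i, j, k.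
Qed.

Lemma core x1 x2 y1 y2 z1 z2 :
  y2*z1 < y1*z2 -> z2*x1 < z1*x2 -> x1*y2 < x2*y1 ->
  exists p q r, [/\ 0<p, 0<q, 0<r & lambda_iso_submonoid p q r (x1,x2) (y1,y2) (z1,z2)].
Proof.
move=> hA hB hC.
have [A hA'] : exists A, A = y1*z2 - y2*z1 by eexists.
have [B hB'] : exists B, B = z1*x2 - z2*x1 by eexists.
have [C hC'] : exists C, C = x2*y1 - x1*y2 by eexists.
have Apos : 0 < A by lia.
have Bpos : 0 < B by lia.
have Cpos : 0 < C by lia.
have AZ : (A%:Z = y1%:Z*z2%:Z - y2%:Z*z1%:Z)%R by lia.
have BZ : (B%:Z = z1%:Z*x2%:Z - z2%:Z*x1%:Z)%R by lia.
have CZ : (C%:Z = x2%:Z*y1%:Z - x1%:Z*y2%:Z)%R by lia.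
have id1Z : (A%:Z*x1%:Z + B%:Z*y1%:Z = C%:Z*z1%:Z)%R by rewrite AZ BZ CZ; ring.
have id2Z : (A%:Z*x2%:Z + B%:Z*y2%:Z = C%:Z*z2%:Z)%R by rewrite AZ BZ CZ; ring.
have id1 : A*x1 + B*y1 = C*z1 by lia.
have id2 : A*x2 + B*y2 = C*z2 by lia.
clear hA' hB' hC'.
have [g hg] : exists g, g = gcdn (gcdn A B) C by eexists.
have gpos : 0 < g by rewrite hg !gcdn_gt0 Apos.
have gA : g %| A by rewrite hg; apply: dvdn_trans (dvdn_gcdl _ _) (dvdn_gcdl _ _).
have gB : g %| B by rewrite hg; apply: dvdn_trans (dvdn_gcdl _ _) (dvdn_gcdr _ _).
have gC : g %| C by rewrite hg; apply: dvdn_gcdr.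
have [c1 [c2 [c3 hbez]]] : exists c1 c2 c3 : int, (c1*A%:Z + c2*B%:Z + c3*C%:Z = g%:Z)%R.
  have [u0 [v0 e0]] := Bezoutz A B.
  have [u1 [v1 e1]] := Bezoutz (gcdz A B) C.
  exists (u1*u0)%R, (u1*v0)%R, v1.
  rewrite hg; rewrite -[X in (_ = X)%R]e1 -e0; ring.
have [p hAp] : exists p, A = p * g by exists (A %/ g); rewrite divnK.
have [q hBq] : exists q, B = q * g by exists (B %/ g); rewrite divnK.
have [r hCr] : exists r, C = r * g by exists (C %/ g); rewrite divnK.
exists p, q, r; split.
- by move: Apos; rewrite hAp muln_gt0 => /andP[].
- by move: Bpos; rewrite hBq muln_gt0 => /andP[].
- by move: Cpos; rewrite hCr muln_gt0 => /andP[].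
apply: iso_of_rel.
  rewrite /add2 /smul2 /=; congr (_,_); apply/eqP; rewrite -(eqn_pmul2r gpos); apply/eqP; lia.
move=> i j k i' j' k'; rewrite /fmap /add2 /smul2 /= => -[E1 E2].
have [d1 hd1] : exists d1 : int, d1 = (i%:Z - i'%:Z)%R by eexists.
have [d2 hd2] : exists d2 : int, d2 = (j%:Z - j'%:Z)%R by eexists.
have [d3 hd3] : exists d3 : int, d3 = (k%:Z - k'%:Z)%R by eexists.
have F1 : (d1*x1%:Z + d2*y1%:Z + d3*z1%:Z = 0)%R by lia.
have F2 : (d1*x2%:Z + d2*y2%:Z + d3*z2%:Z = 0)%R by lia.
have R1 : (d2*A%:Z - d1*B%:Z = 0)%R.
  have -> : (d2*A%:Z - d1*B%:Z = z2%:Z*(d1*x1%:Z + d2*y1%:Z + d3*z1%:Z)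
                 - z1%:Z*(d1*x2%:Z + d2*y2%:Z + d3*z2%:Z))%R by rewrite AZ BZ; ring.
  by rewrite F1 F2 !mulr0 subr0.
have R2 : (d2*C%:Z + d3*B%:Z = 0)%R.
  have -> : (d2*C%:Z + d3*B%:Z = x2%:Z*(d1*x1%:Z + d2*y1%:Z + d3*z1%:Z)
                 - x1%:Z*(d1*x2%:Z + d2*y2%:Z + d3*z2%:Z))%R by rewrite CZ BZ; ring.
  by rewrite F1 F2 !mulr0 subr0.
have R3 : (d1*C%:Z + d3*A%:Z = 0)%R.
  have -> : (d1*C%:Z + d3*A%:Z = y1%:Z*(d1*x2%:Z + d2*y2%:Z + d3*z2%:Z)
                 - y2%:Z*(d1*x1%:Z + d2*y1%:Z + d3*z1%:Z))%R by rewrite CZ AZ; ring.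
  by rewrite F1 F2 !mulr0 subr0.
have gnz : (g%:Z != 0)%R by rewrite eqz_nat -lt0n.
exists (c1*d1 + c2*d2 - c3*d3)%R; rewrite -hd1 -hd2 -hd3; split.
- apply: (mulIf gnz); rewrite -mulrA -PoszM -hAp.
  apply/eqP; rewrite eq_sym -subr_eq0; apply/eqP.
  have -> : ((c1*d1 + c2*d2 - c3*d3) * A%:Z - d1 * g%:Z =
     c2*(d2*A%:Z - d1*B%:Z) - c3*(d1*C%:Z + d3*A%:Z))%R by rewrite -hbez; ring.
  by rewrite R1 R3 !mulr0 subr0.
- apply: (mulIf gnz); rewrite -mulrA -PoszM -hBq.
  apply/eqP; rewrite eq_sym -subr_eq0; apply/eqP.
  have -> : ((c1*d1 + c2*d2 - c3*d3) * B%:Z - d2 * g%:Z =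
     - c1*(d2*A%:Z - d1*B%:Z) - c3*(d2*C%:Z + d3*B%:Z))%R by rewrite -hbez; ring.
  by rewrite R1 R2 !mulr0 subr0.
- apply: (mulIf gnz); rewrite mulNr -mulrA -PoszM -hCr.
  apply/eqP; rewrite eq_sym -subr_eq0; apply/eqP.
  have -> : (- ((c1*d1 + c2*d2 - c3*d3) * C%:Z) - d3 * g%:Z =
     - (c1*(d1*C%:Z + d3*A%:Z) + c2*(d2*C%:Z + d3*B%:Z)))%R by rewrite -hbez; ring.
  by rewrite R3 R2 !mulr0 addr0 oppr0.
Qed.

Lemma sub12 u v w m : in_submonoid3 u v w m -> in_submonoid3 v u w m.
Proof.
move=> [i [j [k ->]]]; exists j, i, k; rewrite /add2 /smul2 /=; congr (_,_); lia.
Qed.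
Lemma sub23 u v w m : in_submonoid3 u v w m -> in_submonoid3 u w v m.
Proof.
move=> [i [j [k ->]]]; exists i, k, j; rewrite /add2 /smul2 /=; congr (_,_); lia.
Qed.

Lemma transfer (x y z u v w : N2) :
  (forall m, in_submonoid3 x y z m <-> in_submonoid3 u v w m) ->
  (exists p q r, [/\ 0<p, 0<q, 0<r & lambda_iso_submonoid p q r x y z]) ->
  exists p q r, [/\ 0<p, 0<q, 0<r & lambda_iso_submonoid p q r u v w].
Proof.
move=> H [p' [q' [r' [h1 h2 h3 [f [f1 f2 f3 f4 f5]]]]]].
exists p', q', r'; split=> //; exists f; split=> // m; rewrite -H; exact: f5.
Qed.

Ltac perm_tac := first [assumption | apply: sub12; assumption | apply: sub23; assumption
  | apply: sub12; apply: sub23; assumption | apply: sub23; apply: sub12; assumption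
  | apply: sub12; apply: sub23; apply: sub12; assumption].

Theorem proposition3p1 (u v w : N2) :
  lin_indep2 u v -> lin_indep2 u w -> lin_indep2 v w ->
  exists p q r : nat, [/\ 0 < p, 0 < q, 0 < r & lambda_iso_submonoid p q r u v w].
Proof.
case: u => [u1 u2]; case: v => [v1 v2]; case: w => [w1 w2]; rewrite /lin_indep2 /=.
move=> Huv Huw Hvw.
have [h1|h1] : u2*v1 < u1*v2 \/ u1*v2 < u2*v1 by lia.
all: have [h2|h2] : v2*w1 < v1*w2 \/ v1*w2 < v2*w1 by lia.
all: have [h3|h3] : w2*u1 < w1*u2 \/ w1*u2 < w2*u1 by lia.
- exfalso; apply: (@noncyc u1 u2 v1 v2 w1 w2); lia.
-
  apply: (transfer (w1,w2) (u1,u2) (v1,v2)).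
    by move=> m; split=> H; perm_tac.
  apply: core; lia.
-
  apply: (transfer (v1,v2) (w1,w2) (u1,u2)).
    by move=> m; split=> H; perm_tac.
  apply: core; lia.
-
  apply: (transfer (v1,v2) (u1,u2) (w1,w2)).
    by move=> m; split=> H; perm_tac.
  apply: core; lia.
-
  apply: core; lia.
-
  apply: (transfer (w1,w2) (v1,v2) (u1,u2)).
    by move=> m; split=> H; perm_tac.
  apply: core; lia.
-
  apply: (transfer (u1,u2) (w1,w2) (v1,v2)).
    by move=> m; split=> H; perm_tac.
  apply: core; lia.
- exfalso; apply: (@noncyc v1 v2 u1 u2 w1 w2); lia.
Qed.
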